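(* Let $q\ge 2$ be a prime power and $m\ge1$ an integer, and let $H_m=\sum_{k=1}^m \frac1k$ be the $m$-th harmonic number. Then $$\prod_{\deg p\le m}\left(1+\frac{1}{|p|}\right)<\exp(H_m),$$ where the product runs over all monic irreducible polynomials $p\in\mathbb{F}_q[x]$ of degree at most $m$.
   Context: For $f\in\mathbb{F}_q[x]$, $|f|=q^{\deg f}$. *)

(* Defs.v *)
From mathcomp Require Import all_boot all_order all_algebra all_field.
From mathcomp Require Import all_classical all_reals all_analysis.
Set Implicit Arguments. Unset Strict Implicit. Unset Printing Implicit Defensive.
Import Order.TTheory GRing.Theory Num.Theory.
Local Open Scope classical_set_scope.
Local Open Scope ring_scope.

Definition monic_irr_deg_le (F : finFieldType) (m : nat) : set {poly F} :=
  [set p | p \is monic /\ irreducible_poly p /\ ((size p).-1 <= m)%N].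

Definition pnorm (R : realType) (F : finFieldType) (p : {poly F}) : R :=
  (#|F|%:R) ^+ (size p).-1.

Definition harmonic_number (R : realType) (m : nat) : R :=
  \sum_(1 <= k < m.+1) (k%:R)^-1.

(* Main.v *)
Require Import Defs.
From mathcomp Require Import all_boot all_order all_algebra all_field.
From mathcomp Require Import all_classical all_reals all_analysis.
Set Implicit Arguments. Unset Strict Implicit. Unset Printing Implicit Defensive.
Import Order.TTheory GRing.Theory Num.Theory.
Local Open Scope classical_set_scope.
Local Open Scope ring_scope.
From mathcomp Require Import lra.
Import Pdiv.Field.
Lemma dvd_XqX (F : finFieldType) (h : {poly F}) : h \is monic -> irreducible_poly h ->
  h %| 'X^(#|F| ^ (size h).-1) - 'X.
Proof.
move=> hM hirr.
have hI : monic_irreducible_poly h by split.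
pose K := {poly %/ h with hI}.
have e : (in_qpoly h 'X : K) ^+ #|K| = in_qpoly h 'X by apply: expf_card.
rewrite card_qfpoly in e.
have : in_qpoly h ('X^(#|F| ^ (size h).-1) - 'X) = 0.
  by rewrite rmorphB rmorphXn /= e subrr.
move=> /val_eqP /=; rewrite -Pdiv.IdomainMonic.modpE ?mk_monicE //.
Qed.
Lemma coprime_irr (F : fieldType) (p q : {poly F}) : p \is monic -> irreducible_poly p ->
  q \is monic -> irreducible_poly q -> p != q -> coprimep p q.
Proof.
move=> pM pI qM qI pq.
rewrite irreducible_poly_coprime //; apply/negP => /(snd qI p).
have := fst pI; case: (size p) => [|[|n]] // _ /(_ isT).
by rewrite eqp_monic // (negPf pq).
Qed.

Lemma prod_dvd (F : fieldType) (s : seq {poly F}) g : uniq s ->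
  (forall p, p \in s -> [/\ p \is monic, irreducible_poly p & p %| g]) ->
  \prod_(p <- s) p %| g.
Proof.
elim: s => [|p s IH] /=; first by rewrite big_nil dvd1p.
move=> /andP[ps us] H; rewrite big_cons Gauss_dvdp.
  have [pM pI pg] := H p (mem_head _ _).
  by rewrite pg IH // => r rs; apply: H; rewrite inE rs orbT.
have [pM pI _] := H p (mem_head _ _).
rewrite big_seq; apply: (big_ind (coprimep p)) => //.
- by rewrite coprimep1.
- by move=> x y; rewrite coprimepMr => -> ->.
move=> r rs; have := H r; rewrite inE rs orbT => /(_ isT) [rM rI _].
by apply: coprime_irr => //; apply: contraNneq ps => ->.
Qed.

Lemma count_irr (F : finFieldType) n k : (0 < k)%N ->
  (k * #|[pred x : {poly_n F} | (val x \is monic) && irreducibleb (val x)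
         && ((size (val x)).-1 == k)]| <= #|F| ^ k)%N.
Proof.
move=> k0.
set P := [pred x : {poly_n F} | _].
pose s := [seq val x | x <- enum P].
have us : uniq s by rewrite map_inj_uniq ?enum_uniq //; apply: val_inj.
have sz : size s = #|P| by rewrite size_map -cardE.
have q1 : (1 < #|F| ^ k)%N.
  by rewrite -(expn0 #|F|) ltn_exp2l ?card_finNzRing_gt1.
pose g : {poly F} := 'X^(#|F| ^ k) - 'X.
have sg : size g = (#|F| ^ k).+1.
  by rewrite /g size_polyDl size_polyXn // size_polyN size_polyX ltnS.
have gn0 : g != 0 by rewrite -size_poly_eq0 sg.
have Hs : forall p, p \in s -> [/\ p \is monic, irreducible_poly p & p %| g].
  move=> p /mapP[x]; rewrite mem_enum /P inE => /andP[/andP[xM /irreducibleP xI] /eqP xk] ->.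
  by split => //; rewrite /g -xk; apply: dvd_XqX.
have := dvdp_leq gn0 (prod_dvd us Hs).
have Hsz : forall p, p \in s -> size p = k.+1.
  move=> p /mapP[x]; rewrite mem_enum /P inE => /andP[/andP[xM /irreducibleP xI] /eqP xk] ->.
  by rewrite -xk prednK // ltnW // (fst xI).
rewrite size_prod_seq; last first.
  by move=> p /Hsz; rewrite -size_poly_eq0 => ->.
rewrite big_seq (eq_bigr (fun=> k.+1)) // -big_seq big_const_seq count_predT iter_addn_0 sg.
rewrite -sz; set N := size s.
by rewrite mulSn -addnS addKn ltnS.
Qed.

Lemma fsbig_to_fin (R : realType) (F : finFieldType) (m : nat) (f : {poly F} -> R) :
  \big[*%R/1]_(p \in @monic_irr_deg_le F m) f p =
  \prod_(x : {poly_(m.+1) F} | (val x \is monic) && irreducibleb (val x)) f (val x).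
Proof.
pose Q := [pred x : {poly_(m.+1) F} | (val x \is monic) && irreducibleb (val x)].
pose r := [seq val x | x <- enum Q].
have ur : uniq r by rewrite map_inj_uniq ?enum_uniq //; apply: val_inj.
rewrite (fsbigE r) //.
- rewrite big_seq_cond (eq_bigl (fun i => i \in r)); last first.
    move=> i; case ir: (i \in r) => //=; rewrite ?andbT.
    move: ir => /mapP[x]; rewrite mem_enum /Q /= => /andP[xM /irreducibleP xI] ->.
    apply: mem_set; split => //; split => //.
    by rewrite -subn1 leq_subLR add1n size_npoly.
  by rewrite -big_seq big_map big_enum; apply: eq_bigl.
- move=> i /= /mapP[x]; rewrite mem_enum /Q /= => /andP[xM /irreducibleP xI] ->.
  split => //; split => //.
  by rewrite -subn1 leq_subLR add1n size_npoly.
- move=> i [iM [iI isz]] /negP []; apply/mapP.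
  have hs : (size i <= m.+1)%N by rewrite (leq_trans (leqSpred _)).
  exists (NPoly hs) => //; rewrite mem_enum /Q inE /= iM /=; exact/irreducibleP.
Qed.

Theorem lemma2 (R : realType) (F : finFieldType) (m : nat) (hm : (1 <= m)%N) :
  \big[*%R/1]_(p \in @monic_irr_deg_le F m) (1 + (@pnorm R F p)^-1)
    < expR (@harmonic_number R m).
Proof.
rewrite fsbig_to_fin.
set Q := (fun x : {poly_(m.+1) F} => (val x \is monic) && irreducibleb (val x)).
pose a (x : {poly_(m.+1) F}) : R := (pnorm R (val x))^-1.
have q0 : (0 : R) < #|F|%:R by rewrite ltr0n; apply: (ltn_trans _ (card_finNzRing_gt1 F)).
have a_gt0 x : 0 < a x by rewrite /a /pnorm invr_gt0 exprn_gt0.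
have s1 : \prod_(x | Q x) (1 + a x) < expR (\sum_(x | Q x) a x).
  have hX : (size ('X : {poly F}) <= m.+1)%N by rewrite size_polyX.
  pose x0 : {poly_(m.+1) F} := NPoly hX.
  have Qx0 : Q x0.
    rewrite /Q /= monicX /=; apply/irreducibleP.
    by have := irredp_XsubC (0 : F); rewrite subr0.
  rewrite expR_sum (bigD1 x0) //= [X in _ < X](bigD1 x0) //=.
  set P1 := \prod_(i | _) _; set P2 := \prod_(i | _) _.
  have h1 : 0 <= P1 by apply: prodr_ge0 => i _; apply: addr_ge0 => //; apply/ltW.
  have h2 : P1 <= P2.
    apply: ler_prod => i _; rewrite expR_ge1Dx andbT.
    by apply: addr_ge0 => //; apply/ltW.
  have h3 : 1 + a x0 < expR (a x0) by apply: expR_gt1Dx; rewrite gt_eqF.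
  have h4 : 0 < 1 + a x0 by rewrite addr_gt0.
  have h5 : 0 < P2 by apply: prodr_gt0 => i _; apply: expR_gt0.
  nra.
apply: (lt_le_trans s1); rewrite ler_expR.
have -> : harmonic_number R m = \sum_(j < m.+1) (j%:R)^-1.
  by rewrite /harmonic_number -(big_mkord xpredT (fun j => (j%:R : R)^-1)) (big_ltn (ltn0Sn m)) /= invr0 add0r.
pose degT (x : {poly_(m.+1) F}) : 'I_m.+1 := inord (size (val x)).-1.
have degTE x : (nat_of_ord (degT x)) = (size (val x)).-1.
  rewrite inordK // ltnS -subn1 leq_subLR add1n; exact: size_npoly.
rewrite (partition_big degT xpredT) //=.
apply: ler_sum => j _.
pose P := [pred x : {poly_(m.+1) F} | (val x \is monic) && irreducibleb (val x)
         && ((size (val x)).-1 == j)].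
have -> : \sum_(x | Q x && (degT x == j)) a x = \sum_(x in P) ((#|F|%:R ^+ j)^-1).
  apply: eq_big => x; first by rewrite /Q inE -degTE.
  by rewrite /a /pnorm -degTE => /andP[_ /eqP ->].
rewrite sumr_const.
case: (posnP j) => [j0|jp].
  have -> : #|P| = 0%N.
    apply: eq_card0 => x; rewrite inE j0.
    case/boolP: (irreducibleb (val x)) => [/irreducibleP [sx _]|]; last by rewrite andbF.
    by rewrite andbT; case: (size (val x)) sx => [|[|n]] //= _; rewrite andbF.
  by rewrite mulr0n.
have hc := @count_irr F m.+1 j jp.
rewrite -[_ *+ #|P|]mulr_natr mulrC ler_pdivrMr ?exprn_gt0 // mulrC ler_pdivlMr ?ltr0n //.
by rewrite -natrX -natrM ler_nat mulnC.
Qed.
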